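(* Assume the setting in the context, with a decomposition of $\mathcal X$ over $A$ and a cost function $g\in\mathcal G_s$. If $$\mathcal R(B)=\bigoplus_{i\in\mathcal I}\big[\mathcal R(B)\cap\mathcal X_i\big],$$ then $\{(A,B|_{\mathcal E_i},g,T)\}_{i\in\mathcal I}$ is a decomposition of $(A,B,g,T)$ for every integer $T>0$, and $\{(A,B|_{\mathcal E_i},g,\alpha)\}_{i\in\mathcal I}$ is a decomposition of $(A,B,g,\alpha)$ for every $\alpha\in(0,1)$.
   Context: Let $\mathcal F$ be a field and $\mathcal X,\mathcal U$ finite-dimensional vector spaces over $\mathcal F$. Let $A:\mathcal X\to\mathcal X$ and $B:\mathcal U\to\mathcal X$ be linear maps with $B$ injective; $\mathcal R(B)$ is the range of $B$. Consider the system $x_{t+1}=Ax_t+Bu_t$ and a cost $g:\mathcal X\to\mathbb R_{\ge 0}$ with $g(x)=0\iff x=0$. Standing assumption: all minima appearing below are attained. Finite-horizon problem $(A,B,g,T)$ ($T>0$ integer): policies $\pi(x_0)=(\pi_t(x_0))_{t=0}^{T-1}\in\mathcal U^T$, cost $J(x_0,\pi)=\sum_{t=0}^T g(x_t)$ with $x_{t+1}=Ax_t+B\pi_t(x_0)$. Infinite-horizon problem $(A,B,g,\alpha)$ ($\alpha\in(0,1)$): policies $\pi(x_0)\in\mathcal U^{\mathbb Z_+}$, cost $J(x_0,\pi)=\sum_{t\ge0}\alpha^tg(x_t)$. In both, $J^*(x_0)=\min_\pi J(x_0,\pi)$ and a minimizing policy is optimal at $x_0$. A decomposition of $\mathcal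 X$ over $A$ is a direct sum $\mathcal X=\mathcal X_1\oplus\cdots\oplus\mathcal X_r$ with $r>1$ and $A\mathcal X_i\subseteq\mathcal X_i$, $i\in\mathcal I=\{1,\dots,r\}$; $\rho_i:\mathcal X\to\mathcal X_i$ is the projection along the other summands. $\mathcal G_s$ is the set of $h:\mathcal X\to\mathbb R_{\ge0}$ with $h(x)=\sum_i h(\rho_i(x))$ for all $x$. $\mathcal E_i=\{u\in\mathcal U:Bu\in\mathcal X_i\}$. Subproblems $(A,B|_{\mathcal E_i},g,T)$ and $(A,B|_{\mathcal E_i},g,\alpha)$: the same problems for the system $x_{i,t+1}=Ax_{i,t}+B\bar u_{i,t}$ with states in $\mathcal X_i$ and inputs in $\mathcal E_i$; optimal costs $\bar J_i^*$, optimal policies $\bar\pi_i^*$. Definition 1: the family of subproblems is a decomposition of the original problem if for every $x\in\mathcal X$: $J^*(x)=\sum_i\bar J_i^*(\rho_i(x))$, and for every choice of optimal policies $\bar\pi_i^*(\rho_i(x))$ there exists an optimal policy $\pi^*(x)$ of the original problem with $\pi^*(x)=\sum_i\bar\pi_i^*(\rho_i(x))$ (componentwise sum). *)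

(* Defs.v *)
From HB Require Import structures.
From mathcomp Require Import all_boot all_order all_algebra.
From Stdlib Require Import Reals ClassicalEpsilon.

Set Implicit Arguments.
Unset Strict Implicit.
Unset Printing Implicit Defensive.

Import GRing.Theory.

(* Extended nonnegative-real values [0, +oo] for infinite-horizon costs. *)
Inductive ereal := EFin (x : R) | EInf.

Definition ere_le (a b : ereal) : Prop :=
  match a, b with
  | _, EInf => True
  | EInf, EFin _ => False
  | EFin x, EFin y => Rle x y
  end.

Definition ere_add (a b : ereal) : ereal :=
  match a, b with
  | EFin x, EFin y => EFin (Rplus x y)
  | _, _ => EInf
  end.

(* Value of a series: its (real) sum if it converges, +oo otherwise
   (for nonnegative terms this is the sum in [0, +oo]). *)
Definition series_ereal (a : nat -> R) : ereal :=
  match excluded_middle_informative (exists l, infinite_sum a l) with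
  | left H => EFin (proj1_sig (constructive_indefinite_description _ H))
  | right _ => EInf
  end.

Section Control.
Local Open Scope ring_scope.
Variables (F : fieldType) (X U : vectType F).

Fixpoint traj (A : 'End(X)) (B : 'Hom(U, X)) (x0 : X) (u : nat -> U) (t : nat)
  : X :=
  match t with
  | 0 => x0
  | t'.+1 => A (traj A B x0 u t') + B (u t')
  end.

Definition fin_cost A B (g : X -> R) (T : nat) (x0 : X) (u : nat -> U) : R :=
  sum_f_R0 (fun t => g (traj A B x0 u t)) T.

Definition disc_cost A B (g : X -> R) (alpha : R) (x0 : X) (u : nat -> U)
  : ereal :=
  series_ereal (fun t => Rmult (pow alpha t) (g (traj A B x0 u t))).

(* Input sequences with values in the input space E (only the first T
   inputs matter for the finite horizon problem). *)
Definition fin_admissible (E : {vspace U}) (T : nat) (u : nat -> U) : Prop :=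
  forall t, leq t.+1 T -> u t \in E.

Definition disc_admissible (E : {vspace U}) (u : nat -> U) : Prop :=
  forall t, u t \in E.

Definition fin_optimal (E : {vspace U}) A B g T x0 (u : nat -> U) : Prop :=
  fin_admissible E T u /\
  forall u', fin_admissible E T u' ->
    Rle (fin_cost A B g T x0 u) (fin_cost A B g T x0 u').

Definition disc_optimal (E : {vspace U}) A B g alpha x0 (u : nat -> U) : Prop :=
  disc_admissible E u /\
  forall u', disc_admissible E u' ->
    ere_le (disc_cost A B g alpha x0 u) (disc_cost A B g alpha x0 u').

Definition Esub (B : 'Hom(U, X)) (Xi : {vspace X}) : {vspace U} :=
  (B @^-1: Xi)%VS.

Definition fin_attained (r : nat) (Xs : 'I_r -> {vspace X}) A B g T : Prop :=
  (forall x, exists u, fin_optimal fullv A B g T x u) /\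
  (forall i x, x \in Xs i -> exists u, fin_optimal (Esub B (Xs i)) A B g T x u).

Definition disc_attained (r : nat) (Xs : 'I_r -> {vspace X}) A B g alpha : Prop :=
  (forall x, exists u, disc_optimal fullv A B g alpha x u) /\
  (forall i x, x \in Xs i ->
     exists u, disc_optimal (Esub B (Xs i)) A B g alpha x u).

Definition is_decomposition_fin (r : nat) (Xs : 'I_r -> {vspace X})
    (rho : 'I_r -> X -> X) A B g T : Prop :=
  forall x : X,
    (forall u (ub : 'I_r -> nat -> U),
        fin_optimal fullv A B g T x u ->
        (forall i, fin_optimal (Esub B (Xs i)) A B g T (rho i x) (ub i)) ->
        fin_cost A B g T x u
        = \big[Rplus/R0]_(i < r) fin_cost A B g T (rho i x) (ub i)) /\
    (forall ub : 'I_r -> nat -> U,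
        (forall i, fin_optimal (Esub B (Xs i)) A B g T (rho i x) (ub i)) ->
        fin_optimal fullv A B g T x (fun t => \sum_(i < r) ub i t)).

Definition is_decomposition_disc (r : nat) (Xs : 'I_r -> {vspace X})
    (rho : 'I_r -> X -> X) A B g alpha : Prop :=
  forall x : X,
    (forall u (ub : 'I_r -> nat -> U),
        disc_optimal fullv A B g alpha x u ->
        (forall i, disc_optimal (Esub B (Xs i)) A B g alpha (rho i x) (ub i)) ->
        disc_cost A B g alpha x u
        = \big[ere_add/EFin R0]_(i < r) disc_cost A B g alpha (rho i x) (ub i)) /\
    (forall ub : 'I_r -> nat -> U,
        (forall i, disc_optimal (Esub B (Xs i)) A B g alpha (rho i x) (ub i)) ->
        disc_optimal fullv A B g alpha x (fun t => \sum_(i < r) ub i t)).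

End Control.

(* Main.v *)
Require Import Defs.
From Stdlib Require Import Reals Lra FunctionalExtensionality ClassicalEpsilon Classical.
From HB Require Import structures.
From mathcomp Require Import all_boot all_order all_algebra.


Lemma series_fin {a l} : infinite_sum a l -> series_ereal a = EFin l.
Proof.
intros H. unfold series_ereal.
destruct (excluded_middle_informative _) as [E|E].
- f_equal. destruct (constructive_indefinite_description _ E) as [l' Hl']; simpl.
  eapply uniqueness_sum; eauto.
- exfalso; apply E; eauto.
Qed.

Lemma series_inf {a} : ~(exists l, infinite_sum a l) -> series_ereal a = EInf.
Proof.
intros H. unfold series_ereal.
destruct (excluded_middle_informative _) as [E|E]; [contradiction|reflexivity].
Qed.

Lemma conv_left {a b} : (forall t, Rle 0 (a t)) -> (forall t, Rle 0 (b t)) ->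
  (exists l, infinite_sum (fun t => Rplus (a t) (b t)) l) -> exists l, infinite_sum a l.
Proof.
intros Ha Hb [l Hl].
assert (Hg : Un_growing (sum_f_R0 a)).
{ intro n. simpl. specialize (Ha (S n)). lra. }
assert (Hg2 : Un_growing (sum_f_R0 (fun t => Rplus (a t) (b t)))).
{ intro n. simpl. specialize (Ha (S n)); specialize (Hb (S n)). lra. }
assert (Hub : has_ub (sum_f_R0 a)).
{ exists l. intros x [i ->].
  apply Rle_trans with (sum_f_R0 (fun t => Rplus (a t) (b t)) i).
  - apply sum_Rle. intros n _. specialize (Hb n). lra.
  - apply growing_ineq; auto. }
destruct (growing_cv _ Hg Hub) as [l' Hl']. exists l'. exact Hl'.
Qed.

Lemma series_add a b : (forall t, Rle 0 (a t)) -> (forall t, Rle 0 (b t)) ->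
  series_ereal (fun t => Rplus (a t) (b t)) = ere_add (series_ereal a) (series_ereal b).
Proof.
intros Ha Hb.
destruct (classic (exists l, infinite_sum a l)) as [[la Hla]|Na].
- destruct (classic (exists l, infinite_sum b l)) as [[lb Hlb]|Nb].
  + rewrite (series_fin Hla) (series_fin Hlb). apply series_fin.
    assert (E : sum_f_R0 (fun t => Rplus (a t) (b t)) =
                (fun n => Rplus (sum_f_R0 a n) (sum_f_R0 b n))).
    { apply functional_extensionality; intro n; apply plus_sum. }
    unfold infinite_sum. change (Un_cv (sum_f_R0 (fun t => Rplus (a t) (b t))) (Rplus la lb)).
    rewrite E. apply CV_plus; assumption.
  + rewrite (series_inf Nb) series_inf.
    * destruct (series_ereal a); reflexivity.
    * intro C. apply Nb. apply (conv_left Hb Ha).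
      destruct C as [l Hl]. exists l.
      assert (E : (fun t => Rplus (b t) (a t)) = (fun t => Rplus (a t) (b t))).
      { apply functional_extensionality; intro; apply Rplus_comm. }
      rewrite E. exact Hl.
- rewrite (series_inf Na) series_inf; [reflexivity|].
  intro C. apply Na. exact (conv_left Ha Hb C).
Qed.

Lemma series_zero : series_ereal (fun _ => R0) = EFin R0.
Proof.
apply series_fin. intros eps He. exists 0%nat. intros n _.
assert (sum_f_R0 (fun _ => R0) n = R0).
{ induction n; simpl; [reflexivity| rewrite IHn; lra]. }
rewrite H. unfold R_dist. rewrite Rminus_0_r Rabs_R0. lra.
Qed.

Lemma bigR_ge0 (I : Type) (s : seq I) (F : I -> R) :
  (forall i, Rle 0 (F i)) -> Rle 0 (\big[Rplus/R0]_(i <- s) F i).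
Proof.
intros H. apply big_ind; [lra| intros; lra | intros; auto].
Qed.

Lemma series_big (I : Type) (s : seq I) (F : I -> nat -> R) :
  (forall i t, Rle 0 (F i t)) ->
  series_ereal (fun t => \big[Rplus/R0]_(i <- s) F i t)
  = \big[ere_add/EFin R0]_(i <- s) series_ereal (F i).
Proof.
intros H. induction s as [|a s IH].
- rewrite big_nil. 
  assert (E : (fun t => \big[Rplus/R0]_(i <- [::]) F i t) = (fun _ => R0)).
  { apply functional_extensionality; intro; apply big_nil. }
  rewrite E. apply series_zero.
- rewrite big_cons.
  assert (E : (fun t => \big[Rplus/R0]_(i <- a :: s) F i t) =
              (fun t => Rplus (F a t) (\big[Rplus/R0]_(i <- s) F i t))).
  { apply functional_extensionality; intro; apply big_cons. }
  rewrite E series_add; [ |auto| intro; apply bigR_ge0; auto].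
  rewrite IH. reflexivity.
Qed.

Lemma sum_big (I : Type) (s : seq I) (F : I -> nat -> R) T :
  sum_f_R0 (fun t => \big[Rplus/R0]_(i <- s) F i t) T
  = \big[Rplus/R0]_(i <- s) sum_f_R0 (F i) T.
Proof.
induction s as [|a s IH].
- rewrite big_nil. induction T; simpl; rewrite ?big_nil; [reflexivity| rewrite IHT; lra].
- rewrite big_cons.
  assert (E : (fun t => \big[Rplus/R0]_(i <- a :: s) F i t) =
              (fun t => Rplus (F a t) (\big[Rplus/R0]_(i <- s) F i t))).
  { apply functional_extensionality; intro; apply big_cons. }
  rewrite E plus_sum IH. reflexivity.
Qed.

Lemma mul_big (I : Type) (s : seq I) (F : I -> R) c :
  Rmult c (\big[Rplus/R0]_(i <- s) F i) = \big[Rplus/R0]_(i <- s) Rmult c (F i).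
Proof.
induction s as [|a s IH]; rewrite ?big_nil ?big_cons; [lra|]. rewrite <- IH. lra.
Qed.

Lemma ere_le_antisym a b : ere_le a b -> ere_le b a -> a = b.
Proof. destruct a, b; simpl; try tauto. intros; f_equal; lra. Qed.

Lemma ere_le_add a1 a2 b1 b2 : ere_le a1 a2 -> ere_le b1 b2 ->
  ere_le (ere_add a1 b1) (ere_add a2 b2).
Proof. destruct a1, a2, b1, b2; simpl; try tauto. intros; lra. Qed.
Section Helpers.
Import GRing.Theory.
Local Open Scope ring_scope.
Set Implicit Arguments. Unset Strict Implicit.

Lemma rho_uniq (F : fieldType) (X : vectType F) r (Xs : 'I_r -> {vspace X}) rho :
  directv (\sum_(i < r) Xs i)%VS -> (forall i x, rho i x \in Xs i) ->
  (forall x, x = \sum_(i < r) rho i x) ->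
  forall (z : 'I_r -> X) y, (forall i, z i \in Xs i) -> y = \sum_(i < r) z i ->
  forall i, rho i y = z i.
Proof.
move=> dir Hr Hs z y Hz Hy i.
apply/eqP; rewrite -subr_eq0; apply/eqP.
move/directv_sum_independent: dir => /(_ (fun i => rho i y - z i)) -> //.
- by move=> j _; rewrite memvB.
- by rewrite sumrB -Hy -Hs subrr.
Qed.

Lemma traj_ext (F : fieldType) (X U : vectType F) (A : 'End(X)) (B : 'Hom(U, X)) x u u' :
  (forall t, B (u t) = B (u' t)) -> forall t, traj A B x u t = traj A B x u' t.
Proof. by move=> H; elim=> [|t IH] //=; rewrite IH H. Qed.

Lemma traj_sum (F : fieldType) (X U : vectType F) (A : 'End(X)) (B : 'Hom(U, X)) r
  (x : 'I_r -> X) (w : 'I_r -> nat -> U) t :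
  traj A B (\sum_(i < r) x i) (fun t => \sum_(i < r) w i t) t
  = \sum_(i < r) traj A B (x i) (w i) t.
Proof.
elim: t => [|t IH] //=. by rewrite IH !linear_sum -big_split.
Qed.

Lemma traj_in (F : fieldType) (X U : vectType F) (A : 'End(X)) (B : 'Hom(U, X))
  (Xi : {vspace X}) x w t :
  (A @: Xi <= Xi)%VS -> x \in Xi ->
  (forall t', (t' < t)%N -> w t' \in Esub B Xi) -> traj A B x w t \in Xi.
Proof.
move=> HA Hx. elim: t => [|t IH] Hw //=.
rewrite memvD //.
- apply: (subvP HA); apply: memv_img; apply: IH => t' Ht'; apply: Hw; exact: ltnW.
- by rewrite memv_preim; apply: Hw.
Qed.

Lemma input_dec (F : fieldType) (X U : vectType F) (B : 'Hom(U, X)) r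
  (Xs : 'I_r -> {vspace X}) rho :
  directv (\sum_(i < r) Xs i)%VS -> (forall i x, rho i x \in Xs i) ->
  (forall x, x = \sum_(i < r) rho i x) ->
  limg B = (\sum_(i < r) (limg B :&: Xs i))%VS ->
  forall (y : U) i, B ((B^-1)%VF (rho i (B y))) = rho i (B y) /\
     (B^-1)%VF (rho i (B y)) \in Esub B (Xs i).
Proof.
move=> dir Hr Hs Hlim y i.
have : B y \in limg B by apply: memv_img; apply: memvf.
rewrite {1}Hlim => /memv_sumP [vs Hvs Hy].
have Hy2 : B y = \sum_(i < r) vs i by move: Hy; rewrite unlock.
have Hz : forall j, vs j \in Xs j by move=> j; case/memv_capP: (Hvs j isT).
have E : rho i (B y) = vs i by exact: (rho_uniq dir Hr Hs Hz Hy2 i).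
case/memv_capP: (Hvs i isT) => H1 H2.
have K : B ((B^-1)%VF (rho i (B y))) = rho i (B y) by rewrite E limg_lfunVK.
split => //.
by rewrite /Esub -memv_preim K.
Qed.

Lemma input_sum (F : fieldType) (X U : vectType F) (B : 'Hom(U, X)) r
  (Xs : 'I_r -> {vspace X}) rho :
  directv (\sum_(i < r) Xs i)%VS -> (forall i x, rho i x \in Xs i) ->
  (forall x, x = \sum_(i < r) rho i x) ->
  limg B = (\sum_(i < r) (limg B :&: Xs i))%VS ->
  forall (y : U), B y = B (\sum_(i < r) (B^-1)%VF (rho i (B y))).
Proof.
move=> dir Hr Hs Hlim y.
rewrite linear_sum {1}(Hs (B y)); apply: eq_bigr => i _.
by case: (input_dec dir Hr Hs Hlim y i).
Qed.

Lemma core (F : fieldType) (X U : vectType F) (A : 'End(X)) (B : 'Hom(U, X)) (g : X -> R)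
  r (Xs : 'I_r -> {vspace X}) rho :
  directv (\sum_(i < r) Xs i)%VS -> (forall i x, rho i x \in Xs i) ->
  (forall x, x = \sum_(i < r) rho i x) ->
  (forall i, (A @: Xs i <= Xs i)%VS) ->
  (forall x, g x = \big[Rplus/R0]_(i < r) g (rho i x)) ->
  forall x (w : 'I_r -> nat -> U) t,
  (forall i t', (t' < t)%N -> w i t' \in Esub B (Xs i)) ->
  g (traj A B x (fun t => \sum_(i < r) w i t) t)
  = \big[Rplus/R0]_(i < r) g (traj A B (rho i x) (w i) t).
Proof.
move=> dir Hr Hs HA Hg x w t Hw.
rewrite Hg; apply: eq_bigr => i _; congr g.
apply: (rho_uniq dir Hr Hs (z:=fun i => traj A B (rho i x) (w i) t)) => [j|].
- by apply: traj_in => //; apply: Hw.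
- by rewrite {1}(Hs x) traj_sum.
Qed.
End Helpers.
Import GRing.Theory.

Theorem theorem1 (F : fieldType) (X U : vectType F)
    (A : 'End(X)) (B : 'Hom(U, X)) (g : X -> R)
    (r : nat) (Xs : 'I_r -> {vspace X}) (rho : 'I_r -> X -> X) :
  (* B injective *)
  (lker B = 0)%VS ->
  (* decomposition of X over A *)
  leq 2 r ->
  directv (\sum_(i < r) Xs i)%VS ->
  (\sum_(i < r) Xs i)%VS = fullv ->
  (forall i, (A @: Xs i <= Xs i)%VS) ->
  (* rho i is the projection onto Xs i along the other summands *)
  (forall i x, rho i x \in Xs i) ->
  (forall x, x = (\sum_(i < r) rho i x)%R) ->
  (* cost g : X -> R_{>=0}, g x = 0 <-> x = 0, and g in G_s *)
  (forall x, Rle R0 (g x)) ->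
  (forall x, g x = R0 <-> x = 0%R) ->
  (forall x, g x = \big[Rplus/R0]_(i < r) g (rho i x)) ->
  (* R(B) = (+)_i [R(B) cap X_i] *)
  directv (\sum_(i < r) (limg B :&: Xs i))%VS ->
  limg B = (\sum_(i < r) (limg B :&: Xs i))%VS ->
  (forall T : nat, leq 1 T ->
     fin_attained Xs A B g T -> is_decomposition_fin Xs rho A B g T) /\
  (forall alpha : R, Rlt R0 alpha -> Rlt alpha R1 ->
     disc_attained Xs A B g alpha -> is_decomposition_disc Xs rho A B g alpha).
Proof.
move=> _ _ dir _ HA Hr Hs g0 _ Hg _ Hlim.
pose v := fun (u : nat -> U) i t => (B^-1)%VF (rho i (B (u t))).
have Hv : forall u i t, v u i t \in Esub B (Xs i).
  by move=> u i t; case: (input_dec dir Hr Hs Hlim (u t) i).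
have Htr : forall x u t, traj A B x u t = traj A B x (fun t => (\sum_(i < r) v u i t)%R) t.
  by move=> x u; apply: traj_ext => t; apply: (input_sum dir Hr Hs Hlim).
have fin_dec : forall T x (w : 'I_r -> nat -> U),
    (forall i t, (t.+1 <= T)%N -> w i t \in Esub B (Xs i)) ->
    fin_cost A B g T x (fun t => (\sum_(i < r) w i t)%R)
    = \big[Rplus/R0]_(i < r) fin_cost A B g T (rho i x) (w i).
  move=> T x w Hw. rewrite /fin_cost -sum_big. apply: PartSum.sum_eq => t /leP Ht.
  apply: (core dir Hr Hs HA Hg) => i t' Ht'. apply: Hw. exact: leq_trans Ht' Ht.
have fin_opt : forall T x (ub : 'I_r -> nat -> U),
    (forall i, fin_optimal (Esub B (Xs i)) A B g T (rho i x) (ub i)) ->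
    fin_optimal fullv A B g T x (fun t => (\sum_(i < r) ub i t)%R).
  move=> T x ub Hub. split; first by move=> t _; apply: memvf.
  move=> u' _. rewrite fin_dec; last by move=> i; case: (Hub i).
  have -> : fin_cost A B g T x u' = fin_cost A B g T x (fun t => (\sum_(i < r) v u' i t)%R).
    by rewrite /fin_cost; apply: PartSum.sum_eq => t _; rewrite -Htr.
  rewrite fin_dec; last by move=> i t _; apply: Hv.
  apply: big_ind2 => [|a1 a2 b1 b2 H1 H2|i _]; [lra| lra| ].
  case: (Hub i) => _ H; apply: H => t _; apply: Hv.
have disc_dec : forall alpha, Rle R0 alpha -> forall x (w : 'I_r -> nat -> U),
    (forall i t, w i t \in Esub B (Xs i)) ->
    disc_cost A B g alpha x (fun t => (\sum_(i < r) w i t)%R)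
    = \big[ere_add/EFin R0]_(i < r) disc_cost A B g alpha (rho i x) (w i).
  move=> alpha Ha x w Hw. rewrite /disc_cost -series_big; last first.
    by move=> i t; apply: Rmult_le_pos; [apply: pow_le | apply: g0].
  congr series_ereal; apply: functional_extensionality => t.
  rewrite (core dir Hr Hs HA Hg) ?mul_big // => i t' _; apply: Hw.
have disc_opt : forall alpha, Rle R0 alpha -> forall x (ub : 'I_r -> nat -> U),
    (forall i, disc_optimal (Esub B (Xs i)) A B g alpha (rho i x) (ub i)) ->
    disc_optimal fullv A B g alpha x (fun t => (\sum_(i < r) ub i t)%R).
  move=> alpha Ha x ub Hub. split; first by move=> t; apply: memvf.
  move=> u' _. rewrite (disc_dec alpha Ha x ub); last by move=> i; case: (Hub i).
  have -> : disc_cost A B g alpha x u' =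
            disc_cost A B g alpha x (fun t => (\sum_(i < r) v u' i t)%R).
    by rewrite /disc_cost; congr series_ereal; apply: functional_extensionality => t; rewrite -Htr.
  rewrite (disc_dec alpha Ha x (v u')); last by move=> i t; apply: Hv.
  apply: big_ind2 => [|a1 a2 b1 b2 H1 H2|i _]; [simpl; lra| exact: ere_le_add| ].
  case: (Hub i) => _ H; apply: H => t; apply: Hv.
split.
- move=> T _ _ x; split; last exact: fin_opt.
  move=> u ub Hu Hub. rewrite -fin_dec; last by move=> i; case: (Hub i).
  apply: Rle_antisym.
  + by apply: (proj2 Hu); case: (fin_opt T x ub Hub).
  + by apply: (proj2 (fin_opt T x ub Hub)); case: Hu.
- move=> alpha Ha _ _ x; have Ha' : Rle R0 alpha by lra.
  split; last exact: disc_opt.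
  move=> u ub Hu Hub. rewrite -disc_dec //; last by move=> i; case: (Hub i).
  apply: ere_le_antisym.
  + by apply: (proj2 Hu); case: (disc_opt alpha Ha' x ub Hub).
  + by apply: (proj2 (disc_opt alpha Ha' x ub Hub)); case: Hu.
Qed.
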